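(* For every $r\in[0,1]$, the density of $1$'s in $\operatorname{Mix}(0^\omega,1^\omega,r)$ exists and equals $r$.
   Context: For $X,Y\in2^\omega$, $(X\oplus Y)(2n)=X(n)$, $(X\oplus Y)(2n+1)=Y(n)$. The map $b:[0,1]\to2^\omega$ is defined recursively by $b(0)=0^\omega$, $b(1)=1^\omega$, $b(r)=0^\omega\oplus b(2r)$ for $0<r\le1/2$, $b(r)=b(2r-1)\oplus1^\omega$ for $1/2\le r<1$. Chunks: $n_j=\sum_{i<j}i$, $I_j=[n_j,n_{j+1})$. $\operatorname{Mix}(X_0,X_1,r)$ is the sequence whose restriction to $I_j$ equals $X_{b(r)(j)}\restriction I_j$ for every $j$. *)

(* Defs.v *)
From Stdlib Require Import Reals Lra Lia Arith.
Open Scope R_scope.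

Definition cantor := nat -> bool.

Definition zeros : cantor := fun _ => false.
Definition ones_seq : cantor := fun _ => true.

Definition join (X Y : cantor) : cantor :=
  fun n => if Nat.even n then X (Nat.div2 n) else Y (Nat.div2 n).

(** Position 0 is the
    only position whose recursion does not decrease the index; it is 1
    exactly when r = 1 (this is forced by the recursive equations, see
    [b_spec] below, which proves that [b] satisfies the paper's equations). *)
Fixpoint bk (k : nat) (r : R) (n : nat) : bool :=
  match k with
  | O => false
  | S k' =>
    match n with
    | O => if Req_EM_T r 1 then true else false
    | _ => if Nat.even n
           then (if Rle_dec r (1/2) then false else bk k' (2*r-1) (Nat.div2 n))
           else (if Rle_dec (1/2) r then true else bk k' (2*r) (Nat.div2 n))
    end
  end.

Definition b (r : R) : cantor := fun n => bk (S n) r n.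

Fixpoint tri (j : nat) : nat :=
  match j with O => O | S j' => (tri j' + j')%nat end.

(** chunk k = the j with k in I_j = [n_j, n_{j+1}) (the largest j with n_j <= k). *)
Fixpoint chunk_aux (j k : nat) : nat :=
  match j with
  | O => O
  | S j' => if Nat.leb (tri j) k then j else chunk_aux j' k
  end.
Definition chunk (k : nat) : nat := chunk_aux (S k) k.

Definition Mix (X0 X1 : cantor) (r : R) : cantor :=
  fun k => if b r (chunk k) then X1 k else X0 k.

Fixpoint count_ones (X : cantor) (n : nat) : nat :=
  match n with O => O | S n' => (count_ones X n' + (if X n' then 1 else 0))%nat end.

Definition density_is (X : cantor) (d : R) : Prop :=
  Un_cv (fun n => INR (count_ones X n) / INR n) d.

Lemma bk_fuel : forall k k' r n, (n < k)%nat -> (n < k')%nat -> bk k r n = bk k' r n.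
Proof.
  induction k as [|k IH]; intros k' r n Hk Hk'; [lia|].
  destruct k' as [|k']; [lia|].
  destruct n as [|n]; [reflexivity|]. cbn [bk].
  assert (H : (Nat.div2 (S n) < S n)%nat) by (apply Nat.lt_div2; lia).
  destruct (Nat.even (S n)); destruct (Rle_dec _ _); try reflexivity;
  apply IH; lia.
Qed.

Lemma b_unfold r n : (0 < n)%nat -> b r n =
  if Nat.even n
  then (if Rle_dec r (1/2) then false else b (2*r-1) (Nat.div2 n))
  else (if Rle_dec (1/2) r then true else b (2*r) (Nat.div2 n)).
Proof.
  intros Hn. unfold b. destruct n as [|m]; [lia|].
  change (bk (S (S m)) r (S m)) with
    (match S m with O => if Req_EM_T r 1 then true else false | _ =>
       if Nat.even (S m)
       then (if Rle_dec r (1/2) then false else bk (S m) (2*r-1) (Nat.div2 (S m)))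
       else (if Rle_dec (1/2) r then true else bk (S m) (2*r) (Nat.div2 (S m))) end).
  cbv iota beta.
  assert (H : (Nat.div2 (S m) < S m)%nat) by (apply Nat.lt_div2; lia).
  destruct (Nat.even (S m)); destruct (Rle_dec _ _); try reflexivity;
  apply bk_fuel; lia.
Qed.

Lemma b_zero n : b 0 n = false.
Proof.
  induction n as [n IH] using (well_founded_induction lt_wf).
  destruct n as [|m].
  - unfold b; simpl. destruct (Req_EM_T 0 1); [lra|reflexivity].
  - rewrite b_unfold by lia.
    destruct (Nat.even (S m)); destruct (Rle_dec _ _); try lra; try reflexivity.
    replace (2*0) with 0 by lra. apply IH. apply Nat.lt_div2; lia.
Qed.

Lemma b_one n : b 1 n = true.
Proof.
  induction n as [n IH] using (well_founded_induction lt_wf).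
  destruct n as [|m].
  - unfold b; simpl. destruct (Req_EM_T 1 1); [reflexivity|lra].
  - rewrite b_unfold by lia.
    destruct (Nat.even (S m)); destruct (Rle_dec _ _); try lra; try reflexivity.
    replace (2*1-1) with 1 by lra. apply IH. apply Nat.lt_div2; lia.
Qed.

Lemma b_spec :
  (forall n, b 0 n = zeros n) /\ (forall n, b 1 n = ones_seq n) /\
  (forall r, 0 < r <= 1/2 -> forall n, b r n = join zeros (b (2*r)) n) /\
  (forall r, 1/2 <= r < 1 -> forall n, b r n = join (b (2*r-1)) ones_seq n).
Proof.
  split; [exact b_zero|]. split; [exact b_one|]. split.
  - intros r Hr n. unfold join, zeros. destruct n as [|m].
    + unfold b; simpl. destruct (Req_EM_T r 1); [lra|reflexivity].
    + rewrite b_unfold by lia.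
      destruct (Nat.even (S m)); destruct (Rle_dec _ _); try lra; try reflexivity.
      assert (r = 1/2) by lra. subst r. replace (2*(1/2)) with 1 by lra.
      symmetry; apply b_one.
  - intros r Hr n. unfold join, ones_seq. destruct n as [|m].
    + unfold b; simpl. destruct (Req_EM_T r 1); [lra|].
      destruct (Req_EM_T (2*r-1) 1); [lra|reflexivity].
    + rewrite b_unfold by lia.
      destruct (Nat.even (S m)); destruct (Rle_dec _ _); try lra; try reflexivity.
      assert (r = 1/2) by lra. subst r. replace (2*(1/2)-1) with 0 by lra.
      symmetry; apply b_zero.
Qed.

(* Main.v *)
Require Import Defs.
From Stdlib Require Import Reals Lra Lia Arith.
Open Scope R_scope.

Lemma abs_le x y : Rabs x <= y -> -y <= x <= y.
Proof. unfold Rabs; destruct (Rcase_abs x); lra. Qed.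
Lemma abs_le' x y : -y <= x <= y -> Rabs x <= y.
Proof. unfold Rabs; destruct (Rcase_abs x); lra. Qed.

Lemma count_S X N : count_ones X (S N) = (count_ones X N + (if X N then 1 else 0))%nat.
Proof. reflexivity. Qed.

Lemma count_ext X Y N : (forall n, X n = Y n) -> count_ones X N = count_ones Y N.
Proof. intros H; induction N; [reflexivity|]. rewrite !count_S, IHN, H; reflexivity. Qed.

Lemma count_le X N : (count_ones X N <= N)%nat.
Proof. induction N; [simpl; lia|]. rewrite count_S; destruct (X N); lia. Qed.

Lemma even_sd M : Nat.even (S (2*M)) = false.
Proof. replace (S (2*M)) with (2*M+1)%nat by lia. apply Nat.even_odd. Qed.

Lemma count_join0 Y M : count_ones (join zeros Y) (2*M) = count_ones Y M.
Proof.
  induction M; [reflexivity|].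
  replace (2*S M)%nat with (S (S (2*M))) by lia.
  rewrite !count_S, IHM. unfold join.
  rewrite even_sd, Nat.even_even, Nat.div2_double, Nat.div2_succ_double.
  unfold zeros. lia.
Qed.

Lemma count_join1 Y M : count_ones (join Y ones_seq) (2*M) = (count_ones Y M + M)%nat.
Proof.
  induction M; [reflexivity|].
  replace (2*S M)%nat with (S (S (2*M))) by lia.
  rewrite !count_S, IHM. unfold join.
  rewrite even_sd, Nat.even_even, Nat.div2_double, Nat.div2_succ_double.
  unfold ones_seq. destruct (Y M); lia.
Qed.

Definition cnt r N := count_ones (b r) N.
Definition e r N := INR (cnt r N) - r * INR N.

Lemma cnt_zero N : cnt 0 N = 0%nat.
Proof. unfold cnt. induction N; [reflexivity|]. rewrite count_S, IHN, b_zero. reflexivity. Qed.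
Lemma cnt_one N : cnt 1 N = N.
Proof. unfold cnt. induction N; [reflexivity|]. rewrite count_S, IHN, b_one. lia. Qed.

Lemma cnt_lo r M : 0 <= r <= 1/2 -> cnt r (2*M) = cnt (2*r) M.
Proof.
  intros H. destruct (Req_dec r 0) as [->|Hr].
  - replace (2*0) with 0 by lra. rewrite !cnt_zero. reflexivity.
  - destruct b_spec as (_&_&H3&_). unfold cnt.
    rewrite (count_ext _ _ _ (H3 r ltac:(lra))). apply count_join0.
Qed.

Lemma cnt_hi r M : 1/2 <= r <= 1 -> cnt r (2*M) = (cnt (2*r-1) M + M)%nat.
Proof.
  intros H. destruct (Req_dec r 1) as [->|Hr].
  - replace (2*1-1) with 1 by lra. rewrite !cnt_one. lia.
  - destruct b_spec as (_&_&_&H4). unfold cnt.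
    rewrite (count_ext _ _ _ (H4 r ltac:(lra))). apply count_join1.
Qed.

Lemma e_lo r M : 0 <= r <= 1/2 -> e r (2*M) = e (2*r) M.
Proof. intros H. unfold e. rewrite cnt_lo by lra. rewrite mult_INR. simpl (INR 2). ring. Qed.
Lemma e_hi r M : 1/2 <= r <= 1 -> e r (2*M) = e (2*r-1) M.
Proof. intros H. unfold e. rewrite cnt_hi by lra. rewrite plus_INR, mult_INR. simpl (INR 2). ring. Qed.

Lemma e_S r m : 0 <= r <= 1 -> Rabs (e r (S m)) <= Rabs (e r m) + 1.
Proof.
  intros H. unfold e, cnt. rewrite count_S, plus_INR, S_INR.
  pose proof (Rabs_triang_inv2 0 0). apply abs_le'.
  pose proof (Rabs_pos (INR (count_ones (b r) m) - r * INR m)).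
  pose proof (Rle_abs (INR (count_ones (b r) m) - r * INR m)).
  pose proof (Rle_abs (-(INR (count_ones (b r) m) - r * INR m))).
  rewrite Rabs_Ropp in *.
  destruct (b r m); simpl (INR _); lra.
Qed.

Lemma e_step r N : 0 <= r <= 1 -> Rabs (e r N) <= Rabs (e r (2*Nat.div2 N)) + 2.
Proof.
  intros H. rewrite (Nat.div2_odd N) at 1. destruct (Nat.odd N); simpl Nat.b2n.
  - rewrite Nat.add_1_r. pose proof (e_S r (2*Nat.div2 N) H). lra.
  - rewrite Nat.add_0_r. lra.
Qed.

Lemma e_bound K : forall N r, 0 <= r <= 1 -> Rabs (e r N) <= 2*INR K + INR N / 2^K.
Proof.
  induction K; intros N r H.
  - simpl. apply abs_le'. unfold e, cnt.
    pose proof (le_INR _ _ (count_le (b r) N)). pose proof (pos_INR (count_ones (b r) N)).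
    pose proof (pos_INR N). unfold Rdiv. rewrite Rinv_1. nra.
  - pose proof (e_step r N H).
    assert (HM: INR (2 * Nat.div2 N) <= INR N).
    { apply le_INR. rewrite (Nat.div2_odd N) at 2. lia. }
    rewrite mult_INR in HM. simpl (INR 2) in HM.
    assert (Hp : 0 < 2^K) by (apply pow_lt; lra).
    assert (Hd : INR (Nat.div2 N) / 2^K <= INR N / 2^(S K)).
    { simpl pow. unfold Rdiv. rewrite Rinv_mult.
      pose proof (Rinv_0_lt_compat _ Hp). nra. }
    rewrite S_INR.
    destruct (Rle_dec r (1/2)).
    + rewrite e_lo in H0 by lra. pose proof (IHK (Nat.div2 N) (2*r) ltac:(lra)). lra.
    + rewrite e_hi in H0 by lra. pose proof (IHK (Nat.div2 N) (2*r-1) ltac:(lra)). lra.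
Qed.

Fixpoint wsum (X:cantor) J := match J with O => O | S J' => (wsum X J' + (if X J' then J' else 0))%nat end.
Definition E r J := INR (wsum (b r) J) - r * INR (tri J).
Fixpoint sume r J := match J with O => 0 | S J' => sume r J' + e r (S J') end.

Lemma E_id r J : E r J = INR J * e r J - sume r J.
Proof.
  induction J.
  - unfold E, e, cnt. simpl. ring.
  - unfold E, e, cnt in *. cbn [wsum tri sume]. unfold e, cnt. rewrite count_S.
    rewrite !plus_INR, S_INR. destruct (b r J); simpl (INR 1); simpl (INR 0); nra.
Qed.

Lemma sume_bound K r J : 0 <= r <= 1 ->
  Rabs (sume r J) <= INR J * (2*INR K + INR J * / 2^K).
Proof.
  intros H. assert (Ha : 0 < / 2^K) by (apply Rinv_0_lt_compat, pow_lt; lra).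
  induction J.
  - simpl. rewrite Rabs_R0. lra.
  - cbn [sume]. pose proof (e_bound K (S J) r H). unfold Rdiv in H0.
    pose proof (Rabs_triang (sume r J) (e r (S J))). rewrite S_INR in *.
    pose proof (pos_INR J). pose proof (pos_INR K). nra.
Qed.

Lemma E_bound K r J : 0 <= r <= 1 ->
  Rabs (E r J) <= 2 * INR J * (2*INR K + INR J * / 2^K).
Proof.
  intros H. rewrite E_id. pose proof (sume_bound K r J H).
  pose proof (e_bound K J r H). unfold Rdiv in H1.
  pose proof (Rabs_triang (INR J * e r J) (- sume r J)). rewrite Rabs_Ropp in H2.
  rewrite Rabs_mult, (Rabs_right (INR J)) in H2 by (apply Rle_ge, pos_INR).
  pose proof (pos_INR J).
  pose proof (Rmult_le_compat_l (INR J) _ _ H3 H1). unfold Rminus. lra.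
Qed.

Lemma chunk_aux_spec m k : (k < tri (S m))%nat ->
  (tri (chunk_aux m k) <= k < tri (S (chunk_aux m k)))%nat.
Proof.
  induction m; intros H.
  - simpl in H. lia.
  - change (chunk_aux (S m) k) with (if Nat.leb (tri (S m)) k then S m else chunk_aux m k).
    destruct (Nat.leb_spec (tri (S m)) k); [lia|]. apply IHm; lia.
Qed.

Lemma chunk_spec k : (tri (chunk k) <= k < tri (S (chunk k)))%nat.
Proof.
  apply chunk_aux_spec. change (tri (S (S k))) with (tri (S k) + S k)%nat. lia.
Qed.

Lemma tri_mono j j' : (j <= j')%nat -> (tri j <= tri j')%nat.
Proof. induction 1; [lia|]. change (tri (S m)) with (tri m + m)%nat. lia. Qed.

Lemma chunk_unique j k : (tri j <= k < tri (S j))%nat -> chunk k = j.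
Proof.
  intros H. pose proof (chunk_spec k).
  destruct (Nat.lt_trichotomy (chunk k) j) as [h|[h|h]]; auto.
  - pose proof (tri_mono (S (chunk k)) j h). lia.
  - pose proof (tri_mono (S j) (chunk k) h). lia.
Qed.

Lemma count_const X a v len : (forall i, (i < len)%nat -> X (a+i)%nat = v) ->
  count_ones X (a+len) = (count_ones X a + (if v then len else 0))%nat.
Proof.
  induction len; intros H.
  - rewrite Nat.add_0_r. destruct v; lia.
  - rewrite Nat.add_succ_r, count_S, IHlen by (intros; apply H; lia).
    rewrite H by lia. destruct v; lia.
Qed.

Lemma mix_at r J i : (i < J)%nat -> Mix zeros ones_seq r (tri J + i)%nat = b r J.
Proof.
  intros H. unfold Mix. rewrite (chunk_unique J).
  - destruct (b r J); reflexivity.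
  - change (tri (S J)) with (tri J + J)%nat. lia.
Qed.

Lemma count_mix_tri r J : count_ones (Mix zeros ones_seq r) (tri J) = wsum (b r) J.
Proof.
  induction J; [reflexivity|].
  change (tri (S J)) with (tri J + J)%nat.
  rewrite (count_const _ _ (b r J)) by (apply mix_at). rewrite IHJ. reflexivity.
Qed.

Lemma count_mix r n : count_ones (Mix zeros ones_seq r) n =
  (wsum (b r) (chunk n) + (if b r (chunk n) then n - tri (chunk n) else 0))%nat.
Proof.
  pose proof (chunk_spec n). change (tri (S (chunk n))) with (tri (chunk n) + chunk n)%nat in H.
  replace n with (tri (chunk n) + (n - tri (chunk n)))%nat at 1 by lia.
  rewrite (count_const _ _ (b r (chunk n))).
  - rewrite count_mix_tri. reflexivity.
  - intros i Hi. apply mix_at. lia.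
Qed.

Lemma two_tri J : (2 * tri J + J = J * J)%nat.
Proof. induction J; [reflexivity|]. change (tri (S J)) with (tri J + J)%nat. nia. Qed.

Lemma pow2_ge K : 1 + INR K <= 2^K.
Proof. induction K; [simpl; lra|]. rewrite S_INR. simpl pow. pose proof (pos_INR K). lra. Qed.

Theorem lemma2p9 : forall r : R, 0 <= r <= 1 ->
  density_is (Mix zeros ones_seq r) r.
Proof.
  intros r Hr eps Heps.
  destruct (INR_unbounded (16/eps)) as [K HK].
  set (a := / 2^K).
  assert (Hp : 0 < 2^K) by (apply pow_lt; lra).
  assert (Ha0 : 0 < a) by (apply Rinv_0_lt_compat; exact Hp).
  assert (Ha : a <= eps/16).
  { pose proof (pow2_ge K).
    assert (0 < 16/eps) by (unfold Rdiv; apply Rmult_lt_0_compat; [lra|apply Rinv_0_lt_compat; lra]).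
    assert (a < / (16/eps)) by (apply Rinv_lt_contravar; nra).
    replace (/(16/eps)) with (eps/16) in H1 by (field; lra). lra. }
  set (X := 4*INR K + 1 + eps/2).
  destruct (INR_unbounded (8/(3*eps) * X)) as [J0 HJ0].
  exists (J0*J0+1)%nat. intros n Hn. unfold R_dist.
  set (J := chunk n).
  pose proof (chunk_spec n) as Hc. fold J in Hc.
  change (tri (S J)) with (tri J + J)%nat in Hc.
  assert (HJ : (J0 <= J)%nat).
  { destruct (Nat.le_gt_cases J0 J) as [h|h]; auto.
    pose proof (tri_mono (S J) J0 h). change (tri (S J)) with (tri J + J)%nat in H.
    pose proof (two_tri J0). lia. }
  apply le_INR in HJ.
  pose proof (two_tri J) as HT. apply (f_equal INR) in HT.
  rewrite plus_INR, !mult_INR in HT. simpl (INR 2) in HT.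
  assert (Hd : (n - tri J < J)%nat) by lia.
  assert (Hn' : INR n = INR (tri J) + INR (n - tri J)).
  { rewrite <- plus_INR. f_equal. lia. }
  apply lt_INR in Hd.
  pose proof (pos_INR (n - tri J)) as Hd0.
  rewrite count_mix. fold J.
  pose proof (E_bound K r J Hr) as HE. fold a in HE. apply abs_le in HE. unfold E in HE.
  assert (HD : - (2 * INR J * (2*INR K + INR J * a) + INR J) <=
     INR (wsum (b r) J + (if b r J then n - tri J else 0)) - r * INR n <=
     2 * INR J * (2*INR K + INR J * a) + INR J).
  { rewrite plus_INR, Hn'. destruct (b r J); simpl (INR 0); nra. }
  assert (HJp : 8/(3*eps) * X * (3*eps/8) = X) by (field; lra).
  assert (HX : X < INR J * (3*eps/8)) by nra.
  assert (Hpos : 0 < INR J).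
  { assert (0 <= X) by (unfold X; pose proof (pos_INR K); lra). nra. }
  assert (HB : 2 * INR J * (2*INR K + INR J * a) + INR J < eps * INR n).
  { assert (INR J * X < INR J * (INR J * (3*eps/8))) by (apply Rmult_lt_compat_l; lra).
    assert (INR J * INR J * a <= INR J * INR J * (eps/16)) by (apply Rmult_le_compat_l; nra).
    unfold X in H. nra. }
  assert (Hnp : 0 < INR n) by nra.
  set (c := INR (wsum (b r) J + (if b r J then n - tri J else 0))) in *.
  set (q := c / INR n).
  assert (Hq : c = q * INR n) by (unfold q; field; lra).
  rewrite Hq in HD.
  apply Rabs_def1.
  - destruct (Rlt_le_dec (q - r) eps); auto. nra.
  - destruct (Rlt_le_dec (-eps) (q - r)); auto. nra.
Qed.
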